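(* Let $W$ be an affine extended Coxeter group (notation as in the context) and let $D$ be a Weyl chamber. Then the submonoid $X_D:=\{x\in X:\rho(x)\in\overline D\}$ of $X$ is finitely generated as a monoid (here $\rho(x)$ denotes the translation vector by which $x$ acts).
   Context: An affine extended Coxeter group consists of a group $W$, a homomorphism $\rho:W\to\mathrm{Aut}_{\mathrm{aff}}(V)$ to the affine automorphism group of a finite-dimensional real vector space $V$, a locally finite set $\mathfrak H$ of affine hyperplanes in $V$, a connected component $C_0$ of $V\setminus\bigcup_{H\in\mathfrak H}H$, and elements $\widetilde s_H\in W$ ($H\in\mathfrak H$) such that: (ACI) $\rho(w)(H)\in\mathfrak H$ for all $w,H$; (ACII) $\rho(\widetilde s_H)$ is a reflection fixing $H$; (ACIII) the group $W_0:=\rho_0(W)$ of linear parts is finite; (ACIV) $0$ is a special point (every $H\in\mathfrak H$ is parallel to some $H'\in\mathfrak H$ with $0\in H'$); (ACV) the translations in $\rho(W)$ span $V/L$ as a real vector space, where $L=\bigcap_{H\in\mathfrak H,0\in H}H$; (ACVI) $w\widetilde s_Hw^{-1}=\widetilde s_{\rho(w)(H)}$; (ACVII) if $H_1,H_2$ are walls of $C_0$ (i.e. $H\cap\overline{C_0}$ has nonempty interior in $H$) and $\rho(\widetilde s_{H_1}\widetilde s_{H_2})$ has finite order $m$, then $(\widetilde s_{H_1}\widetilde s_{H_2})^m=1$; (ACVIII) $W_0$ is generated by the images of the $\widetilde s_H$; (ACIX) $0\in\overline{C_0}$; (ACX) $X:=\rho^{-1}(V)$ (elements acting by translations) is finitely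 generated and commutative. With $H_{\alpha,k}=\{v:\alpha(v)+k=0\}$, set $\Phi=\{\alpha\in V^\vee:\forall k\in\mathbb R,\ H_{\alpha,k}\in\mathfrak H\iff k\in\mathbb Z\}$; Weyl chambers are the connected components of $V\setminus\bigcup_{\alpha\in\Phi}\ker\alpha$. *)

(* Defs.v *)
From HB Require Import structures.
From mathcomp Require Import all_boot all_order all_algebra.
From mathcomp Require Import all_classical all_reals all_analysis.
Import numFieldNormedType.Exports.

Set Implicit Arguments.
Unset Strict Implicit.
Unset Printing Implicit Defensive.

Import Order.TTheory GRing.Theory Num.Theory.
Local Open Scope classical_set_scope.
Local Open Scope ring_scope.

(* The real vector space V is modelled as row vectors 'rV[R]_n over a real
   field R : realType (with its product topology); linear forms alpha in V^v
   are column vectors a : 'cV[R]_n, acting by v |-> (v *m a) 0 0.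
   The group W is an arbitrary (possibly infinite) groupType (boot/monoid.v).
   rho(w) is the affine map v |-> v *m lin w + tr w ; lin w is its linear
   part rho_0(w) and tr w its translation part. *)

Section AffineCoxeter.
Variables (R : realType) (n : nat).
Local Notation V := 'rV[R]_n.

Definition lform (a : 'cV[R]_n) (v : V) : R := (v *m a) 0 0.

Definition Hak (a : 'cV[R]_n) (k : R) : set V := [set v | lform a v + k = 0].

Definition is_affine_hyperplane (H : set V) : Prop :=
  exists (a : 'cV[R]_n) (k : R), a != 0 /\ H = Hak a k.

Definition aff_act (W : groupType) (lin : W -> 'M[R]_n) (tr : W -> V)
  (w : W) (v : V) : V := v *m lin w + tr w.

Definition locally_finite (Hs : set (set V)) : Prop :=
  forall v : V, exists U : set V, nbhs v U /\
    finite_set [set H | Hs H /\ (H `&` U) !=set0].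

Definition is_component (S C : set V) : Prop :=
  exists x, S x /\ C = connected_component S x.

Definition parallel (H H' : set V) : Prop :=
  exists t : V, H' = (fun v => v + t) @` H.

Definition is_wall (Hs : set (set V)) (C H : set V) : Prop :=
  Hs H /\ exists U : set V, open U /\ (U `&` H) !=set0 /\
    U `&` H `<=` H `&` closure C.

Definition is_reflection_fixing (f : V -> V) (H : set V) : Prop :=
  (forall v, f (f v) = v) /\ [set v | f v = v] = H.

Definition compl_union (Hs : set (set V)) : set V :=
  ~` \bigcup_(H in Hs) H.

Definition is_affine_ext_coxeter (W : groupType) (lin : W -> 'M[R]_n)
  (tr : W -> V) (Hs : set (set V)) (C0 : set V) (s : set V -> W) : Prop :=
  let act := aff_act lin tr in
  let L := \bigcap_(H in [set H | Hs H /\ H 0]) H in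
  let Xt := [set w : W | lin w = 1%:M] in
  (* rho : W -> Aut_aff(V) is a group homomorphism *)
   (forall w, lin w \in unitmx) /\
   (forall w1 w2 v, act (w1 * w2)%g v = act w1 (act w2 v)) /\
   (forall H, Hs H -> is_affine_hyperplane H) /\ locally_finite Hs /\
   is_component (compl_union Hs) C0 /\
   (forall w H, Hs H -> Hs (act w @` H)) /\
   (forall H, Hs H -> is_reflection_fixing (act (s H)) H) /\
   finite_set (range lin) /\
   (forall H, Hs H -> exists H', [/\ Hs H', H' 0 & parallel H H']) /\
   (forall v : V, exists l : V, L l /\
      exists c : seq (R * W), (forall p, p \in c -> Xt p.2) /\
        v = l + \sum_(p <- c) p.1 *: tr p.2) /\
   (forall w H, Hs H -> (w * s H * w^-1)%g = s (act w @` H)) /\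
   (forall H1 H2 (m : nat), is_wall Hs C0 H1 -> is_wall Hs C0 H2 ->
      (0 < m)%N ->
      (forall v, act ((s H1 * s H2) ^+ m)%g v = v) ->
      (forall k : nat, (0 < k < m)%N ->
         ~ (forall v, act ((s H1 * s H2) ^+ k)%g v = v)) ->
      ((s H1 * s H2) ^+ m)%g = 1%g) /\
   (* (ACVIII) : W_0 is generated by the rho_0(s_H) *)
   (forall w : W, exists ms : seq 'M[R]_n,
      (forall M, M \in ms -> exists H, Hs H /\
          (M = lin (s H) \/ M = invmx (lin (s H)))) /\
      lin w = foldr mulmx 1%:M ms) /\
   closure C0 0 /\
   (* (ACX) : X = rho^{-1}(V) is finitely generated and commutative *)
   (exists gs : seq W, (forall g, g \in gs -> Xt g) /\
      forall x, Xt x -> exists l : seq W,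
        (forall y, y \in l -> y \in gs \/ (y^-1)%g \in gs) /\
        x = foldr (fun a b => (a * b)%g) 1%g l) /\
   (forall x y, Xt x -> Xt y -> (x * y)%g = (y * x)%g).

Definition root_set (Hs : set (set V)) : set 'cV[R]_n :=
  [set a | forall k : R, Hs (Hak a k) <-> exists z : int, k = z%:~R].

Definition is_weyl_chamber (Hs : set (set V)) (D : set V) : Prop :=
  is_component (compl_union [set Hak a 0 | a in root_set Hs]) D.

Definition XD (W : groupType) (lin : W -> 'M[R]_n) (tr : W -> V)
  (D : set V) : set W :=
  [set x | lin x = 1%:M /\ closure D (tr x)].

Definition fg_monoid (W : groupType) (M : set W) : Prop :=
  exists gs : seq W, (forall g, g \in gs -> M g) /\
    forall x, M x -> exists l : seq W, (forall y, y \in l -> y \in gs) /\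
      x = foldr (fun a b => (a * b)%g) 1%g l.

End AffineCoxeter.

(* Main.v *)
Require Import Defs.
From HB Require Import structures.
From mathcomp Require Import all_boot all_order all_algebra.
From mathcomp Require Import all_classical all_reals all_analysis.
From Stdlib Require List.
From mathcomp Require Import lra.
Set Implicit Arguments.
Unset Strict Implicit.
Unset Printing Implicit Defensive.
Import Order.TTheory GRing.Theory Num.Theory.
Import numFieldNormedType.Exports.

Definition supp (K : nat) (f : nat -> nat) := forall i, (K <= i)%N -> f i = 0%N.
Definition lef (f g : nat -> nat) := forall i, (f i <= g i)%N.
Definition updf (g : nat -> nat) (K t : nat) : nat -> nat :=
  fun i => if i == K then t else g i.

Definition has_basis (S : (nat -> nat) -> Prop) :=
  exists B : seq (nat -> nat), (forall b, List.In b B -> S b) /\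
    forall f, S f -> exists b, List.In b B /\ lef b f.

Lemma lift_list (S : (nat -> nat) -> Prop) K (B1 : seq (nat -> nat)) :
  (forall b, List.In b B1 -> exists t, S (updf b K t)) ->
  exists B1' T, (forall b', List.In b' B1' -> S b') /\
    forall b, List.In b B1 -> exists t, (t <= T)%N /\ List.In (updf b K t) B1'.
Proof.
elim: B1 => [|b B1 IH] H.
  by exists [::], 0%N; split => //.
have [|B1' [T [H1 H2]]] := IH.
  by move=> b' Hb'; apply: H; right.
have [t Ht] := H b (or_introl erefl).
exists (updf b K t :: B1'), (maxn t T); split.
  by move=> b' [<-|/H1].
move=> b0 [<-|Hb0].
  by exists t; split; [rewrite leq_maxl|left].
have [t0 [Ht0 Hin]] := H2 _ Hb0.
exists t0; split; [exact: (leq_trans Ht0 (leq_maxr _ _))|by right].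
Qed.

Lemma dickson K : forall S : (nat -> nat) -> Prop,
  (forall f, S f -> supp K f) -> has_basis S.
Proof.
elim: K => [|K IHK] S HS.
  have [[f0 Hf0]|Hn] := pselect (exists f, S f).
    exists [:: f0]; split; first by move=> b [<-|].
    move=> f _; exists f0; split; first by left.
    by move=> i; rewrite (HS _ Hf0 i).
  exists [::]; split => // f Hf; exfalso; apply: Hn; by exists f.
pose S1 g := supp K g /\ exists t, S (updf g K t).
have [B1 [HB1a HB1b]] : has_basis S1 by apply: IHK => f [].
have [B1' [T [HB1'a HB1'b]]] := @lift_list S K B1 (fun b Hb => (HB1a b Hb).2).
have low : forall T', exists B2, (forall b, List.In b B2 -> S b) /\
    forall f, S f -> (f K < T')%N -> exists b, List.In b B2 /\ lef b f.
  elim=> [|T' [B2 [HB2a HB2b]]].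
    by exists [::]; split => // f _.
  pose S2 g := supp K g /\ S (updf g K T').
  have [B3 [HB3a HB3b]] : has_basis S2 by apply: IHK => f [].
  exists (B2 ++ map (fun g => updf g K T') B3); split.
    move=> b Hb; case: (List.in_app_or _ _ _ Hb) => [/HB2a //|].
    by case/List.in_map_iff => g [<- /HB3a []].
  move=> f Sf; rewrite ltnS leq_eqVlt => /orP [/eqP fK|fK]; last first.
    have [b [Hb Hbf]] := HB2b f Sf fK.
    by exists b; split => //; apply: List.in_or_app; left.
  have S2f : S2 (updf f K 0).
    split.
      move=> i Hi; rewrite /updf; case: eqP => // /eqP iK.
      by apply: (HS _ Sf); rewrite ltn_neqAle eq_sym iK Hi.
    suff -> : updf (updf f K 0) K T' = f by [].
    by apply: funext => i; rewrite /updf; case: eqP => // ->.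
  have [b [Hb Hbf]] := HB3b _ S2f.
  exists (updf b K T'); split.
    by apply: List.in_or_app; right; apply: (List.in_map (fun g => updf g K T')).
  move=> i; rewrite /updf; case: eqP => [->|/eqP iK]; first by rewrite fK.
  by have := Hbf i; rewrite /updf (negbTE iK).
have [B2 [HB2a HB2b]] := low T.
exists (B1' ++ B2); split.
  by move=> b Hb; case: (List.in_app_or _ _ _ Hb) => [/HB1'a|/HB2a].
move=> f Sf; case: (ltnP (f K) T) => fK.
  have [b [Hb Hbf]] := HB2b f Sf fK.
  by exists b; split => //; apply: List.in_or_app; right.
have S1f : S1 (updf f K 0).
  split.
    move=> i Hi; rewrite /updf; case: eqP => // /eqP iK.
    by apply: (HS _ Sf); rewrite ltn_neqAle eq_sym iK Hi.
  exists (f K).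
  suff -> : updf (updf f K 0) K (f K) = f by [].
  by apply: funext => i; rewrite /updf; case: eqP => // ->.
have [b [Hb Hbf]] := HB1b _ S1f.
have [t [Ht Hin]] := HB1'b _ Hb.
exists (updf b K t); split; first by apply: List.in_or_app; left.
move=> i; rewrite /updf; case: eqP => [->|/eqP iK]; first exact: leq_trans Ht fK.
by have := Hbf i; rewrite /updf (negbTE iK).
Qed.

Definition linz (k : nat) (c : nat -> int) (u : nat -> nat) : int :=
  (\sum_(i < k) Posz (u i) * c i)%R.

Definition truncf (k : nat) (w : nat -> nat) : nat -> nat :=
  fun i => if (i < k)%N then w i else 0%N.

Lemma linz_ext k c u v : (forall i, (i < k)%N -> u i = v i) -> linz k c u = linz k c v.
Proof. by move=> H; apply: eq_bigr => i _; rewrite H. Qed.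

Lemma gordan (k r : nat) (c : nat -> nat -> int) :
  let Mon u := supp k u /\ forall j, (j < r)%N -> (0 <= linz k (c j) u)%R in
  exists G : seq (nat -> nat), (forall b, List.In b G -> Mon b) /\
    forall u, Mon u -> exists l : seq (nat -> nat),
      (forall b, List.In b l -> List.In b G) /\ forall i, u i = (\sum_(b <- l) b i)%N.
Proof.
move=> Mon.
pose P w := supp (k + r) w /\ forall j, (j < r)%N -> Posz (w (k + j)%N) = linz k (c j) w.
pose Q w := P w /\ exists2 i, (i < k + r)%N & w i <> 0%N.
have [BQ [HBa HBb]] : has_basis Q by apply: (@dickson (k + r)) => f [[Hs _] _].
exists (map (truncf k) BQ); split.
  move=> b /List.in_map_iff [w [<- /HBa [[Hs Hl] _]]]; split.
    by move=> i Hi; rewrite /truncf ltnNge Hi.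
  move=> j Hj; rewrite (@linz_ext _ _ _ w); first by rewrite -Hl.
  by move=> i Hi; rewrite /truncf Hi.
have main : forall N (w : nat -> nat), (\sum_(i < k + r) w i <= N)%N -> P w ->
    exists l : seq (nat -> nat), (forall b, List.In b l -> List.In b (map (truncf k) BQ)) /\
      forall i, truncf k w i = (\sum_(b <- l) b i)%N.
  elim=> [|N IH] w HN Pw.
    exists [::]; split => // i; rewrite big_nil /truncf; case: ifP => // ik.
    have: (w i <= \sum_(i < k + r) w i)%N.
      by rewrite (bigD1 (Ordinal (ltn_addr r ik))) //= leq_addr.
    by rewrite leqn0 in HN; rewrite (eqP HN) leqn0 => /eqP.
  have [[i0 Hi0 Hw0]|Hn] := pselect (exists2 i, (i < k + r)%N & w i <> 0%N); last first.
    exists [::]; split => // i; rewrite big_nil /truncf; case: ifP => // ik.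
    by apply: contra_notP Hn => Hw; exists i => //; apply: ltn_addr.
  have [b [Hb Hbw]] := HBb w (conj Pw (ex_intro2 _ _ i0 Hi0 Hw0)).
  have [[Hbs Hbl] [i1 Hi1 Hb1]] := HBa b Hb.
  pose w' := fun i => (w i - b i)%N.
  have Pw' : P w'.
    split; first by move=> i Hi; rewrite /w' Pw.1.
    move=> j Hj; rewrite /w' -subzn ?Hbw // Pw.2 // Hbl // /linz -sumrB.
    by apply: eq_bigr => i _; rewrite -subzn ?Hbw // mulrBl.
  have Hsum : (\sum_(i < k + r) w' i < \sum_(i < k + r) w i)%N.
    have -> : (\sum_(i < k + r) w i = \sum_(i < k + r) b i + \sum_(i < k + r) w' i)%N.
      by rewrite -big_split /=; apply: eq_bigr => i _; rewrite /w' subnKC.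
    rewrite -{1}(add0n (\sum_(i < k + r) w' i)) ltn_add2r.
    rewrite (bigD1 (Ordinal Hi1)) //= ltn_addr //; rewrite lt0n; exact/eqP.
  have [l [Hl1 Hl2]] := IH w' (leq_trans (leq_trans Hsum HN) (leqnn _)) Pw'.
  - exists (truncf k b :: l); split.
      move=> b' [<-|/Hl1 //]; exact: List.in_map.
    move=> i; rewrite big_cons -Hl2 /truncf /w'; case: ifP => // _.
    by rewrite subnKC.
move=> u [Hus Hul].
pose w := fun i => if (i < k)%N then u i else if (i < k + r)%N then `|linz k (c (i - k)%N) u|%N else 0%N.
have Pw : P w.
  split.
    move=> i Hi; rewrite /w ifF; last by apply: negbTE; rewrite -leqNgt (leq_trans _ Hi) // leq_addr.
    by rewrite ltnNge Hi.
  move=> j Hj; rewrite /w ifF; last by apply: negbTE; rewrite -leqNgt leq_addr.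
  rewrite ltn_add2l Hj addKn (@linz_ext _ _ w u); last by move=> i Hi; rewrite /w Hi.
  by rewrite gez0_abs // Hul.
have [l [Hl1 Hl2]] := main _ w (leqnn _) Pw.
exists l; split => // i; rewrite -Hl2 /truncf /w; case: (ltnP i k) => // ik.
exact: Hus.
Qed.

Section GroupE.
Variables (G : groupType) (h : seq G).
Hypothesis hcomm : forall i j, commute (nth 1%g h i) (nth 1%g h j).

Definition Ps (s : seq nat) (u : nat -> nat) : G :=
  foldr (fun i acc => (nth 1%g h i ^+ u i) * acc)%g 1%g s.

Definition Eu (u : nat -> nat) : G := Ps (iota 0 (size h)) u.

Lemma commute_Ps x s u : (forall i, commute x (nth 1%g h i)) -> commute x (Ps s u).
Proof.
move=> Hx; elim: s => [|i s IH] /=; first by rewrite /commute mulg1 mul1g.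
by apply: commuteM => //; apply: commuteX.
Qed.

Lemma Ps_add s u v : Ps s (fun i => u i + v i)%N = (Ps s u * Ps s v)%g.
Proof.
elim: s => [|i s IH] /=; first by rewrite mulg1.
rewrite IH expgnDr -!mulgA; congr (_ * _)%g; rewrite !mulgA; congr (_ * _)%g.
apply: commute_Ps => j; apply: commute_sym; apply: commuteX; exact: commute_sym.
Qed.

Lemma Ps0 s : Ps s (fun _ => 0%N) = 1%g.
Proof. by elim: s => [|i s IH] //=; rewrite IH mulg1. Qed.

Lemma Ps_delta s i : uniq s ->
  Ps s (fun j => if j == i then 1%N else 0%N) = if i \in s then nth 1%g h i else 1%g.
Proof.
elim: s => [|j s IH] //= /andP [js us]; rewrite IH // in_cons.
case: (eqVneq j i) => [<-|ji] /=; first by rewrite (negbTE js) mulg1.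
by rewrite mul1g.
Qed.

Lemma Eu_ext u v : (forall i, u i = v i) -> Eu u = Eu v.
Proof. by move=> H; rewrite (funext H). Qed.

Lemma Eu_sum (l : seq (nat -> nat)) u : (forall i, u i = \sum_(b <- l) b i)%N ->
  Eu u = foldr (fun a b => (a * b)%g) 1%g (map Eu l).
Proof.
elim: l u => [|b l IH] u Hu /=.
  by rewrite (@Eu_ext u (fun _ => 0%N)) ?/Eu ?Ps0 // => i; rewrite Hu big_nil.
rewrite -(IH (fun i => \sum_(b <- l) b i)%N) // /Eu -Ps_add.
by apply: Eu_ext => i; rewrite Hu big_cons.
Qed.

Lemma Eu_rep (l : seq G) : (forall y, y \in l -> y \in h) ->
  exists u, supp (size h) u /\ foldr (fun a b => (a * b)%g) 1%g l = Eu u.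
Proof.
elim: l => [|y l IH] Hl /=.
  by exists (fun _ => 0%N); split => //; rewrite /Eu Ps0.
have [|u [Hu ->]] := IH; first by move=> z zl; apply: Hl; rewrite in_cons zl orbT.
have yh : y \in h by apply: Hl; rewrite in_cons eqxx.
pose i := index y h.
exists (fun j => (if j == i then 1%N else 0%N) + u j)%N; split.
  move=> j Hj; rewrite Hu //; case: eqP => // ji.
  by move: Hj; rewrite ji leqNgt index_mem yh.
rewrite /Eu Ps_add Ps_delta ?iota_uniq // mem_iota add0n index_mem yh /=.
by rewrite nth_index.
Qed.

End GroupE.

Local Open Scope classical_set_scope.
Local Open Scope ring_scope.

Section Affine.
Variables (R : realType) (n : nat) (W : groupType)
  (lin : W -> 'M[R]_n) (tr : W -> 'rV[R]_n).
Hypothesis unit : forall w, lin w \in unitmx.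
Hypothesis comp : forall w1 w2 v,
  aff_act lin tr (w1 * w2)%g v = aff_act lin tr w1 (aff_act lin tr w2 v).

Lemma tr_mul w1 w2 : tr (w1 * w2)%g = tr w2 *m lin w1 + tr w1.
Proof. by have := comp w1 w2 0; rewrite /aff_act !mul0mx !add0r. Qed.

Lemma lin_mul w1 w2 : lin (w1 * w2)%g = lin w2 *m lin w1.
Proof.
apply/row_matrixP => i; rewrite !rowE.
have := comp w1 w2 (delta_mx 0 i); rewrite /aff_act tr_mul mulmxDl -mulmxA addrA.
by move/addIr/addIr.
Qed.

Lemma lin1 : lin 1%g = 1%:M.
Proof.
have H := lin_mul 1%g 1%g; rewrite mulg1 in H.
by rewrite -[LHS]mul1mx -(mulVmx (unit 1%g)) -mulmxA -H.
Qed.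

Lemma tr1 : tr 1%g = 0.
Proof.
have H := tr_mul 1%g 1%g; rewrite mulg1 lin1 mulmx1 in H.
by apply/eqP; rewrite -(subrr (tr 1%g)) {2}H addrK.
Qed.

Definition Xt (x : W) := lin x = 1%:M.

Lemma Xt_mul x y : Xt x -> Xt y -> Xt (x * y)%g /\ tr (x * y)%g = tr x + tr y.
Proof.
rewrite /Xt => Hx Hy; rewrite lin_mul tr_mul Hx Hy mulmx1; split => //.
by rewrite mulmx1 addrC.
Qed.

Lemma Xt_inv x : Xt x -> Xt (x^-1)%g.
Proof.
rewrite /Xt => Hx; have := lin_mul x x^-1; rewrite mulgV lin1 Hx mulmx1.
by move=> <-.
Qed.

Lemma Xt1 : Xt 1%g. Proof. exact: lin1. Qed.

Lemma Xt_exp x m : Xt x -> Xt (x ^+ m)%g /\ tr (x ^+ m)%g = m%:R *: tr x.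
Proof.
move=> Hx; elim: m => [|m [IH1 IH2]]; first by rewrite expg0 tr1 scale0r; split => //; exact: Xt1.
rewrite expgS; have [H1 H2] := Xt_mul Hx IH1; split => //.
by rewrite H2 IH2 mulrS scalerDl scale1r.
Qed.

Lemma Xt_Ps (h : seq W) s u : (forall i, Xt (nth 1%g h i)) ->
  Xt (Ps h s u) /\ tr (Ps h s u) = \sum_(i <- s) (u i)%:R *: tr (nth 1%g h i).
Proof.
move=> Hh; elim: s => [|i s [IH1 IH2]] /=; first by rewrite big_nil tr1; split => //; exact: Xt1.
have [E1 E2] := Xt_exp (u i) (Hh i).
have [F1 F2] := Xt_mul E1 IH1; split => //.
by rewrite F2 E2 IH2 big_cons.
Qed.

End Affine.

Section Lform.
Variables (R : realType) (n : nat).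

Lemma lformD (a : 'cV[R]_n) v w : lform a (v + w) = lform a v + lform a w.
Proof. by rewrite /lform mulmxDl mxE. Qed.

Lemma lformZ (a : 'cV[R]_n) c v : lform a (c *: v) = c * lform a v.
Proof. by rewrite /lform -scalemxAl mxE. Qed.

Lemma lformZa (a : 'cV[R]_n) c v : lform (c *: a) v = c * lform a v.
Proof. by rewrite /lform -scalemxAr mxE. Qed.

Lemma lformN (a : 'cV[R]_n) v : lform a (- v) = - lform a v.
Proof. by rewrite /lform mulNmx mxE. Qed.

Lemma lformB (a : 'cV[R]_n) v w : lform a (v - w) = lform a v - lform a w.
Proof. by rewrite lformD lformN. Qed.

Lemma lform_sum (a : 'cV[R]_n) I (s : seq I) (F : I -> 'rV[R]_n) :
  lform a (\sum_(i <- s) F i) = \sum_(i <- s) lform a (F i).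
Proof.
elim: s => [|i s IH]; first by rewrite !big_nil /lform mul0mx mxE.
by rewrite !big_cons lformD IH.
Qed.

Lemma lform_bound (a : 'cV[R]_n) v : `|lform a v| <= (\sum_j `|a j 0|) * `|v|.
Proof.
rewrite /lform mxE mulr_suml; apply: le_trans (ler_norm_sum _ _ _) _.
apply: ler_sum => j _; rewrite normrM mulrC ler_wpM2l //.
rewrite [X in _ <= X]mx_normrE.
exact: (le_bigmax _ (fun ij : 'I_1 * 'I_n => `|v ij.1 ij.2|) (0, j)).
Qed.

Lemma lform_cont (a : 'cV[R]_n) : continuous (lform a).
Proof.
move=> x; apply/(@cvgrPdist_lt _ _ _ _ (nbhs_filter x)) => e e0.
pose C := \sum_j `|a j 0| + 1.
have C0 : 0 < C by rewrite /C ltr_pwDr // sumr_ge0.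
apply/nbhs_ballP; exists (e / C); first by rewrite /= divr_gt0.
move=> y; rewrite mx_norm_ball /= => Hy.
rewrite -lformB; apply: le_lt_trans (lform_bound _ _) _.
have H1 : \sum_j `|a j 0| <= C by rewrite /C lerDl.
apply: (@le_lt_trans _ _ (C * `|x - y|)).
  by rewrite ler_wpM2r.
by rewrite mulrC -ltr_pdivlMr.  
Qed.

End Lform.

Section Chamber.
Variables (R : realType) (n : nat) (als : seq 'cV[R]_n) (S : set 'rV[R]_n) (d : 'rV[R]_n).
Hypothesis HaS : forall a v, a \in als -> S v -> lform a v != 0.
Hypothesis HSa : forall v, (forall a, a \in als -> lform a v != 0) -> S v.
Hypothesis Sd : S d.

Lemma D_pos p a : connected_component S d p -> a \in als -> 0 < lform a d * lform a p.
Proof.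
move=> [C [Cd CS Cc] Cp] aal.
pose b := lform a d *: a.
have Hb v : lform b v = lform a d * lform a v by rewrite lformZa.
have ad0 := HaS aal Sd.
have : C `&` [set v | 0 < lform b v] = C.
  apply: Cc.
  - exists d; split => //=; rewrite Hb -expr2.
    by rewrite lt_def sqrf_eq0 ad0 sqr_ge0.
  - exists (lform b @^-1` [set x | 0 < x]) => //.
    apply: open_comp; last exact: open_gt.
    by move=> x _; apply: lform_cont.
  - exists (lform b @^-1` [set x | 0 <= x]).
      apply: preimage_closed; last exact: closed_ge.
      by move=> x _; apply: lform_cont.
    apply/seteqP; split => v [Cv Hv]; split => //=.
      exact: ltW.
    rewrite lt_def Hv andbT Hb mulf_neq0 //.
    exact: HaS aal (CS _ Cv).
move=> HC; rewrite -Hb; rewrite -HC in Cp; exact: Cp.2.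
Qed.

Lemma closureD v : closure (connected_component S d) v <->
  (forall a, a \in als -> 0 <= lform a d * lform a v).
Proof.
rewrite closureEnbhs /= meets_globallyl; split.
  move=> Hcl a aal; rewrite leNgt; apply/negP => Hneg.
  pose b := lform a d *: a.
  have Hb u : lform b u = lform a d * lform a u by rewrite lformZa.
  have Ob : open (lform b @^-1` [set x | x < 0]).
    by apply: open_comp; [move=> x _; apply: lform_cont|exact: open_lt].
  have Nb : nbhs v (lform b @^-1` [set x | x < 0]).
    by apply: open_nbhs_nbhs; split => //=; rewrite Hb.
  have [p [Dp Op]] := Hcl _ Nb.
  have := D_pos Dp aal; rewrite -Hb => H.
  by move: Op; rewrite /= ltNge (ltW H).
move=> Hv B /nbhs_ballP [del del0 HB].
pose eps := del / (`|d| + 1).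
have eps0 : 0 < eps by rewrite divr_gt0 // ltr_pwDr.
pose w := v + eps *: d.
exists w; split; last first.
  apply: HB; rewrite mx_norm_ball /= /w opprD addrA subrr add0r normrN normrZ.
  rewrite gtr0_norm // /eps mulrAC ltr_pdivrMr ?ltr_pwDr //.
  by rewrite ltr_pM2l // ltrDl.
pose f := fun t : R => d + t *: (w - d).
have fc : continuous f.
  move=> t; rewrite /f. apply: (@continuousD R _ R (fun=> d) (fun t => t *: (w - d)) t).
    exact: cst_continuous.
  by apply: continuousZr_tmp.
exists (f @` `[0, 1]); last by exists 1; [rewrite /= in_itv /= lexx ler01|rewrite /f scale1r addrC subrK].
split.
- by exists 0; [rewrite /= in_itv /= lexx ler01|rewrite /f scale0r addr0].
- move=> p [t]; rewrite /= in_itv /= => /andP [t0 t1] <-.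
  apply: HSa => a aal; rewrite /f lformD lformZ lformB /w lformD lformZ.
  have ad0 := HaS aal Sd.
  have A2 : 0 < lform a d * lform a d by rewrite -expr2 lt_def sqrf_eq0 ad0 sqr_ge0.
  have AB := Hv a aal.
  apply/negP => /eqP H0.
  have : 0 < lform a d * (lform a d + t * (lform a v + eps * lform a d - lform a d)).
    have Hc : 0 < 1 - t + t * eps.
      case: (ltP t 1) => ht; first by nra.
      have -> : t = 1 by apply/eqP; rewrite eq_le t1 ht.
      by rewrite mul1r subrr add0r.
    have H1 : 0 < lform a d * lform a d * (1 - t + t * eps) by rewrite mulr_gt0.
    have H2 : 0 <= t * (lform a d * lform a v) by rewrite mulr_ge0.
    by nra.
  by rewrite H0 mulr0 ltxx.
- apply: connected_continuous_connected; first exact: segment_connected.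
  exact: continuous_subspaceT.
Qed.

End Chamber.

Lemma In_mem (T : eqType) (x : T) s : List.In x s -> x \in s.
Proof. by elim: s => [|y s IH] //= [->|/IH]; rewrite in_cons ?eqxx // => ->; rewrite orbT. Qed.

Lemma mem_In (T : eqType) (x : T) s : x \in s -> List.In x s.
Proof. by elim: s => [|y s IH] //=; rewrite in_cons => /orP [/eqP ->|/IH]; [left|right]. Qed.

Lemma build_als (R : realType) (n : nat) (Phi : set 'cV[R]_n) (L : seq (set 'rV[R]_n)) :
  exists als : seq 'cV[R]_n, (forall a, a \in als -> Phi a) /\
    forall b, Phi b -> Hak b 0 \in L -> exists2 a, a \in als & Hak b 0 = Hak a 0.
Proof.
elim: L => [|H L [als [H1 H2]]]; first by exists [::]; split.
have [[b0 [Pb0 Hb0]]|Hn] := pselect (exists b, Phi b /\ Hak b 0 = H).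
  exists (b0 :: als); split.
    by move=> a; rewrite in_cons => /orP [/eqP ->|/H1].
  move=> b Pb; rewrite in_cons => /orP [/eqP ->|/(H2 _ Pb) [a aal ->]].
    by exists b0; rewrite ?in_cons ?eqxx.
  by exists a; rewrite // in_cons aal orbT.
exists als; split => // b Pb; rewrite in_cons => /orP [/eqP Hb|/(H2 _ Pb) //].
by exfalso; apply: Hn; exists b.
Qed.

Lemma sign_equiv (R : realType) (A : R) (Z : int) : A != 0 ->
  (0 <= A * Z%:~R) = (0 <= (if 0 < A then 1 else -1) * Z).
Proof.
move=> A0; case: ifP => HA; first by rewrite mul1r pmulr_rge0 // ler0z.
have HA' : A < 0 by rewrite lt_neqAle A0 /= leNgt HA.
by rewrite nmulr_rge0 // mulN1r oppr_ge0 lerz0.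
Qed.

Theorem lemma3p3p11 (R : realType) (n : nat) (W : groupType)
  (lin : W -> 'M[R]_n) (tr : W -> 'rV[R]_n) (Hs : set (set 'rV[R]_n))
  (C0 : set 'rV[R]_n) (s : set 'rV[R]_n -> W) (D : set 'rV[R]_n) :
  is_affine_ext_coxeter lin tr Hs C0 s ->
  is_weyl_chamber Hs D ->
  fg_monoid (XD lin tr D).
Proof.
move=> H; move: H => [unit [comp [hyp [locfin [_ [ACI [_ [_ [_ [_ [_ [_ [_ [_ [[gs [gsX gsgen]] Xcomm]]]]]]]]]]]]]]].
move=> [d [Sd ->]].
set Phi := root_set Hs.
set S := compl_union _ in Sd *.
have [U [U0 Ufin]] := locfin 0.
have [sF HsF] := (finite_seqP _).1 Ufin.
have [als [alsPhi alsH]] := build_als Phi sF.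
have PhiHs b : Phi b -> Hs (Hak b 0).
  by move=> Pb; apply/(Pb 0); exists 0.
have alsH' b : Phi b -> exists2 a, a \in als & Hak b 0 = Hak a 0.
  move=> Pb; apply: alsH => //.
  have : [set H | Hs H /\ (H `&` U) !=set0] (Hak b 0).
    split; first exact: PhiHs.
    exists 0; split; last exact: nbhs_singleton U0.
    by rewrite /Hak /= /lform mul0mx mxE addr0.
  by rewrite HsF.
have HaS a v : a \in als -> S v -> lform a v != 0.
  move=> aal Sv; apply/eqP => H0; apply: Sv.
  exists (Hak a 0); first by exists a => //; apply: alsPhi.
  by rewrite /Hak /= H0 addr0.
have HSa v : (forall a, a \in als -> lform a v != 0) -> S v.
  move=> Hv [H0 [b Pb <-]]; have [a aal Hab] := alsH' b Pb.
  rewrite Hab /Hak /= addr0 => /eqP; apply/negP; exact: Hv.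
have clD := closureD HaS HSa Sd.
have integ a x : Phi a -> Xt lin x -> lform a (tr x) = (Num.floor (lform a (tr x)))%:~R.
  move=> Pa Xx.
  have E : aff_act lin tr x @` Hak a 0 = Hak a (- lform a (tr x)).
    apply/seteqP; split => w.
      move=> [u Hu <-]; rewrite /Hak /= /aff_act Xx mulmx1 lformD.
      by move: Hu; rewrite /Hak /= addr0 => ->; rewrite add0r subrr.
    rewrite /Hak /= => Hw; exists (w - tr x).
      by rewrite /= lformB addr0 -[RHS]Hw.
    by rewrite /aff_act Xx mulmx1 subrK.
  have := ACI x _ (PhiHs a Pa); rewrite E => /(Pa _).1 [z Hz].
  by rewrite -[lform a (tr x)]opprK Hz -mulrNz intrKfloor.
pose h := gs ++ map (fun g => g^-1)%g gs.
have hmem y : y \in h -> Xt lin y.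
  rewrite mem_cat => /orP [/gsX //|/mapP [g /gsX Hg ->]].
  exact: Xt_inv unit comp _ Hg.
have hX i : Xt lin (nth 1%g h i).
  case: (ltnP i (size h)) => Hi; first by apply: hmem; rewrite mem_nth.
  by rewrite nth_default //; exact: Xt1 unit comp.
have hcomm i j : commute (nth 1%g h i) (nth 1%g h j) by apply: Xcomm; apply: hX.
pose k := size h.
pose r := size als.
pose al j := nth 0 als j.
pose fl j i := Num.floor (lform (al j) (tr (nth 1%g h i))).
pose sg j : int := if 0 < lform (al j) d then 1 else -1.
pose c j i := sg j * fl j i.
have [G [HG1 HG2]] := gordan k r c.
have relE (u : nat -> nat) (j : nat) : (j < r)%N -> (Xt lin (Eu h u)) /\ (lform (al j) (tr (Eu h u)) = ((\sum_(i < k) Posz (u i) * fl j i)%:~R : R)).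
  move=> jr; have [X1 X2] := Xt_Ps unit comp (iota 0 k) u hX.
  split => //; rewrite /Eu X2 lform_sum rmorph_sum.
  have -> : iota 0 k = index_iota 0 k by rewrite /index_iota subn0.
  rewrite big_mkord.
  apply: eq_bigr => i _; rewrite lformZ rmorphM /=.
  rewrite -pmulrn; congr (_ * _).
  apply: integ; last exact: hX.
  by apply: alsPhi; apply: mem_nth.
have rel2 u j : (j < r)%N -> (0 <= lform (al j) d * lform (al j) (tr (Eu h u))) = (0 <= linz k (c j) u).
  move=> jr; rewrite (relE u j jr).2 sign_equiv; last first.
    by apply: HaS Sd; apply: mem_nth.
  rewrite /linz mulr_sumr; congr (_ <= _); apply: eq_bigr => i _.
  by rewrite /c mulrCA.
have genXD b : List.In b G -> XD lin tr (connected_component S d) (Eu h b).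
  move=> Hb; have [Hbs Hbl] := HG1 b Hb; split.
    by have [X1 _] := Xt_Ps unit comp (iota 0 k) b hX.
  apply/clD => a aal.
  have jr : (index a als < r)%N by rewrite index_mem.
  have := Hbl _ jr; rewrite -rel2 // /al nth_index //.
exists (map (Eu h) G); split.
  by move=> g /mapP [b /mem_In Hb ->]; apply: genXD.
move=> x [Xx clx].
have [l [Hl Ex]] := gsgen x Xx.
have [|u [Hus Eu']] := @Eu_rep _ h hcomm l.
  move=> y /Hl [yg|yg]; rewrite mem_cat; first by rewrite yg.
  by apply/orP; right; apply/mapP; exists y^-1%g; rewrite ?invgK.
rewrite Eu' in Ex; rewrite Ex in clx *.
have Mu : supp k u /\ (forall j, (j < r)%N -> 0 <= linz k (c j) u).
  split => // j jr; rewrite -rel2 //.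
  by move/clD: clx => /(_ (al j)) -> //; apply: mem_nth.
have [l' [Hl'1 Hl'2]] := HG2 u Mu.
exists (map (Eu h) l'); split; last exact: Eu_sum.
move=> y /mapP [b /mem_In Hb ->]; apply: In_mem; apply: List.in_map; exact: Hl'1.
Qed.
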